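(* Let $F$ be any subfield of $\mathbb{R}$ and $\varepsilon\in F$. Then $T[F]$ proves $\forall x\,(x^2-2x+1\ge\varepsilon)$ if and only if $\varepsilon<0$. In particular, $T[F]$ does not prove $\forall x\,(x^2-2x+1\ge0)$.
   Context: For $a\in F$, $f_a$ is a unary function symbol interpreted as $f_a(x)=ax$; a constant $c\in F$ is denoted by the term $f_c(1)$. $x^2$ denotes $x\times x$ and $2x$ denotes $f_2(x)$. $T_{\mathrm{add}}[F]$ is the set of sentences true in $(\mathbb{R},0,1,+,-,<,(f_a)_{a\in F})$, $T_{\mathrm{mult}}[F]$ the set of sentences true in $(\mathbb{R},0,1,\times,\div,<,(f_a)_{a\in F})$ with $x\div0=0$, and $T[F]=T_{\mathrm{add}}[F]\cup T_{\mathrm{mult}}[F]$, a theory in the union of the two languages. *)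

(* Defs.v *)
From Stdlib Require Import Reals.
Open Scope R_scope.

Definition is_subfield (F : R -> Prop) : Prop :=
  F 0 /\ F 1 /\
  (forall x y, F x -> F y -> F (x + y)) /\
  (forall x, F x -> F (- x)) /\
  (forall x y, F x -> F y -> F (x * y)) /\
  (forall x, F x -> x <> 0 -> F (/ x)).

(* Terms of the union language (variables indexed by nat).
   [Fa a t] is the unary symbol f_a applied to t. *)
Inductive term : Type :=
| Var : nat -> term
| Zero : term
| One : term
| Add : term -> term -> term
| Sub : term -> term -> term
| Mul : term -> term -> term
| Div : term -> term -> term
| Fa : R -> term -> term.

Inductive formula : Type :=
| Fal : formula
| Eqf : term -> term -> formula
| Ltf : term -> term -> formula
| Neg : formula -> formula
| And : formula -> formula -> formula
| Or : formula -> formula -> formula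
| Imp : formula -> formula -> formula
| All : nat -> formula -> formula
| Ex : nat -> formula -> formula.

Fixpoint term_add (F : R -> Prop) (t : term) : Prop :=
  match t with
  | Var _ | Zero | One => True
  | Add u w | Sub u w => term_add F u /\ term_add F w
  | Mul _ _ | Div _ _ => False
  | Fa a u => F a /\ term_add F u
  end.

Fixpoint term_mult (F : R -> Prop) (t : term) : Prop :=
  match t with
  | Var _ | Zero | One => True
  | Mul u w | Div u w => term_mult F u /\ term_mult F w
  | Add _ _ | Sub _ _ => False
  | Fa a u => F a /\ term_mult F u
  end.

Fixpoint formula_in (tin : term -> Prop) (p : formula) : Prop :=
  match p with
  | Fal => True
  | Eqf u w | Ltf u w => tin u /\ tin w
  | Neg q | All _ q | Ex _ q => formula_in tin q
  | And q r | Or q r | Imp q r => formula_in tin q /\ formula_in tin r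
  end.

Fixpoint tfree (n : nat) (t : term) : Prop :=
  match t with
  | Var m => m = n
  | Zero | One => False
  | Add u w | Sub u w | Mul u w | Div u w => tfree n u \/ tfree n w
  | Fa _ u => tfree n u
  end.

Fixpoint ffree (n : nat) (p : formula) : Prop :=
  match p with
  | Fal => False
  | Eqf u w | Ltf u w => tfree n u \/ tfree n w
  | Neg q => ffree n q
  | And q r | Or q r | Imp q r => ffree n q \/ ffree n r
  | All m q | Ex m q => m <> n /\ ffree n q
  end.

Definition sentence (p : formula) : Prop := forall n, ~ ffree n p.

Record structure : Type := Structure {
  dom : Type;
  s0 : dom;
  s1 : dom;
  sadd : dom -> dom -> dom;
  ssub : dom -> dom -> dom;
  smul : dom -> dom -> dom;
  sdiv : dom -> dom -> dom;
  slt : dom -> dom -> Prop;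
  sf : R -> dom -> dom }.

Definition upd {D : Type} (v : nat -> D) (n : nat) (d : D) : nat -> D :=
  fun m => if Nat.eqb m n then d else v m.

Fixpoint teval (M : structure) (v : nat -> dom M) (t : term) : dom M :=
  match t with
  | Var n => v n
  | Zero => s0 M
  | One => s1 M
  | Add u w => sadd M (teval M v u) (teval M v w)
  | Sub u w => ssub M (teval M v u) (teval M v w)
  | Mul u w => smul M (teval M v u) (teval M v w)
  | Div u w => sdiv M (teval M v u) (teval M v w)
  | Fa a u => sf M a (teval M v u)
  end.

Fixpoint sat (M : structure) (v : nat -> dom M) (p : formula) : Prop :=
  match p with
  | Fal => False
  | Eqf u w => teval M v u = teval M v w
  | Ltf u w => slt M (teval M v u) (teval M v w)
  | Neg q => ~ sat M v q
  | And q r => sat M v q /\ sat M v r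
  | Or q r => sat M v q \/ sat M v r
  | Imp q r => sat M v q -> sat M v r
  | All n q => forall d : dom M, sat M (upd v n d) q
  | Ex n q => exists d : dom M, sat M (upd v n d) q
  end.

(* Division with the convention x / 0 = 0. *)
Definition rdiv0 (x y : R) : R :=
  if Req_EM_T y 0 then 0 else x / y.

(* The real field, expanding both (R,0,1,+,-,<,f_a) and (R,0,1,*,/,<,f_a). *)
Definition Rstruct : structure :=
  Structure R 0 1 Rplus Rminus Rmult rdiv0 Rlt (fun a x => a * x).

Definition true_in_R (p : formula) : Prop := forall v, sat Rstruct v p.

Definition in_T (F : R -> Prop) (p : formula) : Prop :=
  sentence p /\ true_in_R p /\
  (formula_in (term_add F) p \/ formula_in (term_mult F) p).

(* T[F] proves p, via the completeness theorem: p holds in every model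
   of T[F] (structures of the union language). *)
Definition proves (F : R -> Prop) (p : formula) : Prop :=
  forall M : structure,
    (forall q, in_T F q -> forall v, sat M v q) ->
    forall v, sat M v p.

(* The sentence  ∀x (x^2 - 2x + 1 >= eps), with x = variable 0,
   x^2 = x*x, 2x = f_2(x), eps = f_eps(1), and a >= b := b < a \/ b = a. *)
Definition poly_term : term :=
  Add (Sub (Mul (Var 0) (Var 0)) (Fa 2 (Var 0))) One.

Definition target (eps : R) : formula :=
  All 0 (Or (Ltf (Fa eps One) poly_term) (Eqf (Fa eps One) poly_term)).

(* Main.v *)
Require Import Defs.
From Stdlib Require Import Reals.
Open Scope R_scope.
From Stdlib Require Import Lra Lia ZArith.
From Stdlib Require Import ClassicalEpsilon ProofIrrelevance FunctionalExtensionality PropExtensionality Classical.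

Definition isUltra (U : (nat -> Prop) -> Prop) :=
  U (fun _ => True) /\ ~ U (fun _ => False) /\
  (forall A B, U A -> U B -> U (fun n => A n /\ B n)) /\
  (forall A B : nat -> Prop, (forall n, A n -> B n) -> U A -> U B) /\
  (forall A, U A \/ U (fun n => ~ A n)) /\
  (forall k, U (fun n => (k <= n)%nat)).

Module UF.
From mathcomp Require Import all_boot all_classical.
Lemma ultra_exists : exists U, isUltra U.
Proof.
have [G [GU sub]] := ultraFilterLemma (eventually_filter : ProperFilter (eventually : set_system nat)).
exists G. have GF : ProperFilter G by exact: ultra_proper.
split; first exact: filterT.
split; first by move=> H; have := filter_ex H; case.
split; first by move=> A B HA HB; exact: (filterI HA HB).
split; first by move=> A B AB HA; exact: (filterS AB HA).
split; first by move=> A; exact: in_ultra_setVsetC.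
move=> k; apply: sub; exists k => // n /= /leP. done.
Qed.
End UF.


Definition G (s t d : R) : R :=
  if Rlt_dec 0 s then Rmax 0 (t - s * (1 + d))
  else if Rlt_dec s 0 then Rmin 0 (t - s * (1 + d)) else 0.
Definition psi s t d := t + G s t d.
Definition phi s t d := t - G s t d / 2.

Ltac gcase := unfold psi, phi, G, Rmax, Rmin in *;
  repeat match goal with
  | |- context [Rlt_dec ?a ?b] => destruct (Rlt_dec a b)
  | |- context [Rle_dec ?a ?b] => destruct (Rle_dec a b)
  | H : context [Rlt_dec ?a ?b] |- _ => destruct (Rlt_dec a b)
  | H : context [Rle_dec ?a ?b] |- _ => destruct (Rle_dec a b)
  | |- context [Rabs ?a] => unfold Rabs
  | |- context [Rcase_abs ?a] => destruct (Rcase_abs a)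
  end.

Lemma G0 t d : G 0 t d = 0.
Proof. unfold G. destruct (Rlt_dec 0 0); [lra|]. destruct (Rlt_dec 0 0); [lra|]. auto. Qed.

Lemma Gss s d : 0 <= d -> G s s d = 0.
Proof. intros. gcase; nra. Qed.

Lemma psi_phi s t d : psi s (phi s t d) d = t.
Proof. gcase; nra. Qed.

Lemma psi_mono s t u d : t < u -> psi s t d < psi s u d.
Proof. intros. gcase; nra. Qed.

Lemma G_scale a s t d : G (a * s) (a * t) d = a * G s t d.
Proof.
  destruct (Rtotal_order a 0) as [Ha|[Ha|Ha]].
  - gcase; nra.
  - subst. rewrite !Rmult_0_l. rewrite G0. ring.
  - gcase; nra.
Qed.

Lemma psi_prop s t d : 0 < d -> s <> 0 ->
  ((s < t <-> s < psi s t d) /\ (t < s <-> psi s t d < s)) /\ Rabs (psi s t d - t) <= Rabs (t - s).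
Proof. intros. split; [split; split|]; intros; gcase; nra. Qed.

Lemma phi_prop s t d : 0 < d -> s <> 0 ->
  ((s < t <-> s < phi s t d) /\ (t < s <-> phi s t d < s)) /\ Rabs (phi s t d - t) <= Rabs (t - s).
Proof. intros. split; [split; split|]; intros; gcase; nra. Qed.


Definition ge (u w : term) : formula := Or (Ltf w u) (Eqf w u).
Definition P1 : term := Add (Sub (Var 1) (Fa 2 (Var 0))) One.
Definition goalf (eps : R) : formula := ge P1 (Fa eps One).

Definition SA_tri : formula :=
  All 0 (All 1 (Or (Ltf (Var 0) (Var 1)) (Or (Eqf (Var 0) (Var 1)) (Ltf (Var 1) (Var 0))))).
Definition SM_sq (c : R) : formula := All 0 (ge (Mul (Var 0) (Var 0)) (Fa c One)).
Definition SA_neg (eps c : R) : formula :=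
  All 0 (All 1 (Imp (Ltf (Var 0) (Fa c One)) (Imp (ge (Var 1) (Fa c One)) (goalf eps)))).
Definition SM_lin (a : R) : formula :=
  All 0 (Imp (ge (Var 0) (Fa a One)) (ge (Mul (Var 0) (Var 0)) (Fa a (Var 0)))).
Definition SA_int (eps a b : R) : formula :=
  All 0 (All 1 (Imp (ge (Var 0) (Fa a One)) (Imp (Ltf (Var 0) (Fa b One))
     (Imp (ge (Var 1) (Fa a (Var 0))) (goalf eps))))).
Definition SA_top (eps a : R) : formula :=
  All 0 (All 1 (Imp (ge (Var 0) (Fa a One)) (Imp (ge (Var 1) (Fa a (Var 0))) (goalf eps)))).

Ltac sent := let n := fresh "n" in let Hf := fresh "Hf" in intros n Hf; simpl in Hf; lia.

Lemma useT (F : R -> Prop) (M : structure)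
  (HM : forall q, in_T F q -> forall v, sat M v q) q v :
  sentence q -> true_in_R q ->
  (formula_in (term_add F) q \/ formula_in (term_mult F) q) -> sat M v q.
Proof. intros. apply HM. split; [|split]; assumption. Qed.

Section Part1.
Variable F : R -> Prop.
Hypothesis HF : is_subfield F.
Variable eps : R.
Hypothesis Feps : F eps.
Hypothesis neg : eps < 0.
Variable M : structure.
Hypothesis HM : forall q, in_T F q -> forall v, sat M v q.

Lemma F0 : F 0. Proof. apply HF. Qed.
Lemma F1 : F 1. Proof. apply HF. Qed.
Lemma Fadd x y : F x -> F y -> F (x + y). Proof. apply HF. Qed.
Lemma Fmul x y : F x -> F y -> F (x * y). Proof. apply HF. Qed.
Lemma Fopp x : F x -> F (- x). Proof. apply HF. Qed.
Lemma Finv x : F x -> x <> 0 -> F (/ x). Proof. apply HF. Qed.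
Lemma F2 : F 2. Proof. replace 2 with (1 + 1) by ring. apply Fadd; apply F1. Qed.
Lemma FINR k : F (INR k).
Proof. induction k. apply F0. rewrite S_INR. apply Fadd; auto. apply F1. Qed.

Definition dl : R := - eps * / 2.
Lemma Fdl : F dl.
Proof. unfold dl. apply Fmul. apply Fopp; auto. apply Finv. apply F2. lra. Qed.
Lemma dlpos : 0 < dl. Proof. unfold dl. lra. Qed.

Let one := s1 M.
Definition gl (d : dom M) : Prop :=
  slt M (sf M eps one) (sadd M (ssub M (smul M d d) (sf M 2 d)) one) \/
  sf M eps one = sadd M (ssub M (smul M d d) (sf M 2 d)) one.

Lemma tri (x y : dom M) : slt M x y \/ x = y \/ slt M y x.
Proof.
  pose proof (useT F M HM SA_tri (fun _ => x)) as H.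
  assert (H' : sat M (fun _ => x) SA_tri).
  { apply H. sent. intros v. simpl. intros a b. unfold upd; simpl.
    destruct (total_order_T a b) as [[?|?]|?]; auto.
    left. simpl. tauto. }
  simpl in H'. specialize (H' x y). unfold upd in H'; simpl in H'. exact H'.
Qed.

Lemma sq_ge (c : R) (Fc : F c) (c0 : c = 0) (d : dom M) :
  slt M (sf M c one) (smul M d d) \/ sf M c one = smul M d d.
Proof.
  assert (H : sat M (fun _ => d) (SM_sq c)).
  { apply (useT F M HM). sent. intros v. simpl. intros a. unfold upd; simpl.
    subst c. destruct (Req_dec a 0). right. subst. ring. left. 
    assert (0 < a * a) by (apply Rsqr_pos_lt; auto). lra.
    right. simpl. tauto. }
  simpl in H. specialize (H d). unfold upd in H; simpl in H. exact H.
Qed.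

Lemma neg_case (c : R) (Fc : F c) (c0 : c = 0) (d : dom M) :
  slt M d (sf M c one) -> gl d.
Proof.
  intros Hd.
  assert (H : sat M (fun _ => d) (SA_neg eps c)).
  { apply (useT F M HM). sent. intros v. simpl. intros a b. unfold upd; simpl.
    subst c. intros H1 H2. left. lra.
    left. simpl. repeat split; auto using F2. }
  simpl in H. specialize (H d (smul M d d)). unfold upd in H; simpl in H.
  apply H. exact Hd. apply sq_ge; auto.
Qed.

Lemma lin_ge (a : R) (Fa_ : F a) (a0 : 0 <= a) (d : dom M) :
  (slt M (sf M a one) d \/ sf M a one = d) ->
  slt M (sf M a d) (smul M d d) \/ sf M a d = smul M d d.
Proof.
  intros Hd.
  assert (H : sat M (fun _ => d) (SM_lin a)).
  { apply (useT F M HM). sent. intros v. simpl. intros x. unfold upd; simpl.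
    intros [H1|H1].
    - left. nra.
    - right. subst x. ring.
    - right. simpl. tauto. }
  simpl in H. specialize (H d). unfold upd in H; simpl in H. apply H. exact Hd.
Qed.

Lemma int_case (a b : R) (Fa_ : F a) (Fb : F b) (a0 : 0 <= a) (hb : b = a + dl) (d : dom M) :
  (slt M (sf M a one) d \/ sf M a one = d) -> slt M d (sf M b one) -> gl d.
Proof.
  intros H1 H2.
  assert (H : sat M (fun _ => d) (SA_int eps a b)).
  { apply (useT F M HM). sent. intros v. simpl. intros x y. unfold upd; simpl.
    intros Hx Hxb Hy. left. rewrite Rmult_1_r in *.
    assert (Hy' : a * x <= y) by (destruct Hy; lra).
    assert (Hx' : a <= x) by (destruct Hx; lra).
    subst b. unfold dl in *.
    destruct (Rle_dec 2 a).
    + nra.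
    + assert ((a - 2) * x > (a - 2) * (a + - eps * / 2)) by (apply Rmult_lt_gt_compat_neg_l; lra).
      assert (0 <= (a-1)*(a-1)) by (pose proof (Rle_0_sqr (a-1)); unfold Rsqr in *; lra). assert (0 <= a * (- eps * / 2)) by (apply Rmult_le_pos; lra).
      nra.
    + left. simpl. repeat split; auto using F2. }
  simpl in H. specialize (H d (smul M d d)). unfold upd in H; simpl in H.
  apply H; auto. apply lin_ge; auto.
Qed.

Lemma top_case (a : R) (Fa_ : F a) (a2 : 2 <= a) (d : dom M) :
  (slt M (sf M a one) d \/ sf M a one = d) -> gl d.
Proof.
  intros H1.
  assert (H : sat M (fun _ => d) (SA_top eps a)).
  { apply (useT F M HM). sent. intros v. simpl. intros x y. unfold upd; simpl.
    intros Hx Hy. left. rewrite Rmult_1_r in *.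
    assert (Hy' : a * x <= y) by (destruct Hy; lra).
    assert (Hx' : a <= x) by (destruct Hx; lra).
    nra.
    left. simpl. repeat split; auto using F2. }
  simpl in H. specialize (H d (smul M d d)). unfold upd in H; simpl in H.
  apply H; auto. apply lin_ge; auto. lra.
Qed.

Lemma claim (k : nat) (d : dom M) : slt M d (sf M (INR k * dl) one) -> gl d.
Proof.
  revert d. induction k; intros d Hd.
  - apply (neg_case (INR 0 * dl)); auto. apply Fmul. apply FINR. apply Fdl.
    simpl; ring.
  - destruct (tri d (sf M (INR k * dl) one)) as [H|[H|H]].
    + apply IHk; auto.
    + apply (int_case (INR k * dl) (INR (S k) * dl)); auto.
      apply Fmul. apply FINR. apply Fdl. apply Fmul. apply FINR. apply Fdl.
      apply Rmult_le_pos. apply pos_INR. left; apply dlpos.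
      rewrite S_INR; ring.
    + apply (int_case (INR k * dl) (INR (S k) * dl)); auto.
      apply Fmul. apply FINR. apply Fdl. apply Fmul. apply FINR. apply Fdl.
      apply Rmult_le_pos. apply pos_INR. left; apply dlpos.
      rewrite S_INR; ring.
Qed.

Lemma all_gl (d : dom M) : gl d.
Proof.
  destruct (archimed (2 / dl)) as [H1 _].
  assert (Hz : (0 <= up (2 / dl))%Z).
  { apply le_IZR. assert (0 < 2 / dl). { unfold Rdiv. apply Rmult_lt_0_compat. lra.
      apply Rinv_0_lt_compat, dlpos. } lra. }
  set (N := Z.to_nat (up (2 / dl))).
  assert (HN : 2 <= INR N * dl).
  { unfold N. rewrite INR_IZR_INZ. rewrite Z2Nat.id by auto.
    assert (2 / dl * dl = 2) by (field; pose proof dlpos; lra).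
    pose proof dlpos. nra. }
  destruct (tri d (sf M (INR N * dl) one)) as [H|[H|H]].
  - apply (claim N); auto.
  - apply (top_case (INR N * dl)); auto. apply Fmul. apply FINR. apply Fdl.
  - apply (top_case (INR N * dl)); auto. apply Fmul. apply FINR. apply Fdl.
Qed.

End Part1.

Lemma part1 (F : R -> Prop) (HF : is_subfield F) (eps : R) (Feps : F eps) (neg : eps < 0) :
  proves F (target eps).
Proof.
  intros M HM v. simpl. intros d. unfold upd; simpl.
  exact (all_gl F HF eps Feps neg M HM d).
Qed.


Section Ultra.
Variable U : (nat -> Prop) -> Prop.
Hypothesis HU : isUltra U.

Lemma Ufull : U (fun _ => True). Proof. apply HU. Qed.
Lemma Unot0 : ~ U (fun _ => False). Proof. apply HU. Qed.
Lemma Uand A B : U A -> U B -> U (fun n => A n /\ B n). Proof. apply HU. Qed.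
Lemma Umono (A B : nat -> Prop) : (forall n, A n -> B n) -> U A -> U B. Proof. apply HU. Qed.
Lemma Um (A B : nat -> Prop) : U A -> (forall n, A n -> B n) -> U B.
Proof. intros; eapply Umono; eauto. Qed.
Lemma Uem A : U A \/ U (fun n => ~ A n). Proof. apply HU. Qed.
Lemma Ucof k : U (fun n => (k <= n)%nat). Proof. apply HU. Qed.
Lemma Uall (A : nat -> Prop) : (forall n, A n) -> U A.
Proof. intros H. apply (Umono (fun _ => True) A (fun n _ => H n)), Ufull. Qed.
Lemma U2 (A B C : nat -> Prop) : U A -> U B -> (forall n, A n -> B n -> C n) -> U C.
Proof. intros HA HB H. apply (Umono (fun n => A n /\ B n)). intros n [? ?]; auto. apply Uand; auto. Qed.
Lemma U3 (A B C E : nat -> Prop) : U A -> U B -> U C -> (forall n, A n -> B n -> C n -> E n) -> U E.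
Proof. intros HA HB HC H. apply (U2 (fun n => A n /\ B n) C). apply Uand; auto. auto.
  intros n [? ?] ?; auto. Qed.
Lemma Ufalse (A : nat -> Prop) : (forall n, ~ A n) -> ~ U A.
Proof. intros H HA. apply Unot0. apply (Umono A); auto. Qed.
Lemma Uconst (P : Prop) : U (fun _ => P) <-> P.
Proof. split. intros H. destruct (classic P); auto. exfalso. apply (Ufalse _ (fun _ => H0) H).
  intros. apply Uall; auto. Qed.
Lemma Unot (A : nat -> Prop) : U (fun n => ~ A n) <-> ~ U A.
Proof. split. intros H HA. apply (Ufalse (fun n => A n /\ ~ A n)). intros n [? ?]; auto.
  apply Uand; auto. intros H. destruct (Uem A); tauto. Qed.
Lemma Uor (A B : nat -> Prop) : U (fun n => A n \/ B n) -> U A \/ U B.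
Proof. intros H. destruct (Uem A) as [|HA]; auto. right. apply (U2 _ _ _ H HA). intros n [?|?] ?; tauto. Qed.

Definition eqU (f g : nat -> R) := U (fun n => f n = g n).
Lemma eqU_refl f : eqU f f. Proof. apply Uall; auto. Qed.
Lemma eqU_sym f g : eqU f g -> eqU g f. Proof. apply Umono; auto. Qed.
Lemma eqU_trans f g h : eqU f g -> eqU g h -> eqU f h.
Proof. intros A B. apply (U2 _ _ _ A B). intros; congruence. Qed.

Definition inh : inhabited (nat -> R) := inhabits (fun _ => 0).
Definition rep (f : nat -> R) : nat -> R := epsilon inh (fun g => eqU f g).
Lemma rep_spec f : eqU f (rep f).
Proof. unfold rep. apply (epsilon_spec inh (fun g => eqU f g)). exists f. apply eqU_refl. Qed.
Lemma rep_eq f g : eqU f g -> rep f = rep g.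
Proof. intros H. unfold rep. f_equal. apply functional_extensionality. intros h.
  apply propositional_extensionality. split; intros; eauto using eqU_trans, eqU_sym. Qed.

Definition D : Type := {f : nat -> R | rep f = f}.
Definition cl (f : nat -> R) : D := exist _ (rep f) (rep_eq _ _ (eqU_sym _ _ (rep_spec f))).
Definition val (x : D) : nat -> R := proj1_sig x.
Lemma D_ext (x y : D) : val x = val y -> x = y.
Proof. destruct x as [f Hf], y as [g Hg]. simpl. intros ->. f_equal. apply proof_irrelevance. Qed.
Lemma cl_val x : cl (val x) = x.
Proof. apply D_ext. destruct x as [f Hf]. simpl. exact Hf. Qed.
Lemma val_cl f : eqU (val (cl f)) f.
Proof. apply eqU_sym, rep_spec. Qed.
Lemma cl_eq f g : cl f = cl g <-> eqU f g.
Proof. split.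
  - intros H. apply (f_equal val) in H. simpl in H.
    apply (eqU_trans _ (rep f)). apply rep_spec. rewrite H. apply eqU_sym, rep_spec.
  - intros H. apply D_ext. simpl. apply rep_eq; auto. Qed.
Lemma cl_ext f g : (forall n, f n = g n) -> cl f = cl g.
Proof. intros H. apply cl_eq. apply Uall; auto. Qed.

Definition op2 (o : R -> R -> R) (x y : D) : D := cl (fun n => o (val x n) (val y n)).
Definition s0D : D := cl (fun _ => 0).
Definition s1D : D := cl (fun _ => 1).
Definition sfD (a : R) (x : D) : D := cl (fun n => a * val x n).
Definition ltD (x y : D) : Prop := U (fun n => val x n < val y n).

Lemma op2_cl o f g : op2 o (cl f) (cl g) = cl (fun n => o (f n) (g n)).
Proof. apply cl_eq. apply (U2 _ _ _ (val_cl f) (val_cl g)). intros n -> ->. reflexivity. Qed.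
Lemma sfD_cl a f : sfD a (cl f) = cl (fun n => a * f n).
Proof. apply cl_eq. apply (Um _ _ (val_cl f)). intros n ->. reflexivity. Qed.
Lemma ltD_cl f g : ltD (cl f) (cl g) <-> U (fun n => f n < g n).
Proof. unfold ltD. split; intros H.
  - apply (U3 _ _ _ _ H (val_cl f) (val_cl g)). intros n; lra.
  - apply (U3 _ _ _ _ H (val_cl f) (val_cl g)). intros n; lra. Qed.

Definition N : structure := Structure D s0D s1D (op2 Rplus) (op2 Rminus) (op2 Rmult) (op2 rdiv0) ltD sfD.

Definition vn (v : nat -> D) (n : nat) : nat -> R := fun k => val (v k) n.

Lemma teval_N v t : teval N v t = cl (fun n => teval Rstruct (vn v n) t).
Proof.
  induction t; simpl; try rewrite IHt1, IHt2; try rewrite IHt;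
    try apply op2_cl; try apply sfD_cl; try reflexivity.
  symmetry. apply cl_val.
Qed.

Lemma vn_upd v m d n : vn (upd v m d) n = upd (vn v n) m (val d n).
Proof. apply functional_extensionality. intros k. unfold vn, upd. destruct (Nat.eqb k m); auto. Qed.

Lemma los p : forall v, sat N v p <-> U (fun n => sat Rstruct (vn v n) p).
Proof.
  induction p as [| | | |p1 IHp1 p2 IHp2|p1 IHp1 p2 IHp2|p1 IHp1 p2 IHp2|n0 p IHp|n0 p IHp]; intros v; simpl.
  - split. tauto. intros H. exfalso. apply Unot0; auto.
  - rewrite !teval_N. apply cl_eq.
  - rewrite !teval_N. apply ltD_cl.
  - rewrite IHp. rewrite Unot. tauto.
  - rewrite IHp1, IHp2. split.
    + intros [A B]. apply Uand; auto.
    + intros H. split; apply (Um _ _ H); tauto.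
  - rewrite IHp1, IHp2. split.
    + intros [A|B]; [apply (Um _ _ A)|apply (Um _ _ B)]; tauto.
    + apply Uor.
  - rewrite IHp1, IHp2. split.
    + intros H. destruct (Uem (fun n => sat Rstruct (vn v n) p1)) as [A|A].
      * apply (Um _ _ (H A)). tauto.
      * apply (Um _ _ A). tauto.
    + intros H A. apply (U2 _ _ _ H A). tauto.
  - split.
    + intros H. destruct (Uem (fun n => forall r : R, sat Rstruct (upd (vn v n) n0 r) p)) as [A|A]; auto.
      exfalso.
      set (g := fun n => epsilon (inhabits 0) (fun r : R => ~ sat Rstruct (upd (vn v n) n0 r) p)).
      specialize (H (cl g)). apply IHp in H.
      apply (Ufalse _ (fun n (h : False) => h)).
      apply (U3 _ _ _ _ H A (val_cl g)). intros n H1 H2 H3.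
      rewrite vn_upd, H3 in H1. apply not_all_ex_not in H2.
      apply (epsilon_spec (inhabits 0) (fun r : R => ~ sat Rstruct (upd (vn v n) n0 r) p) H2).
      exact H1.
    + intros H d. apply IHp. apply (Um _ _ H). intros n Hn. rewrite vn_upd. apply Hn.
  - split.
    + intros [d Hd]. apply IHp in Hd. apply (Um _ _ Hd). intros n Hn. rewrite vn_upd in Hn. eauto.
    + intros H.
      set (g := fun n => epsilon (inhabits 0) (fun r : R => sat Rstruct (upd (vn v n) n0 r) p)).
      exists (cl g). apply IHp. apply (U2 _ _ _ H (val_cl g)). intros n H1 H2.
      rewrite vn_upd, H2. apply (epsilon_spec (inhabits 0) (fun r : R => sat Rstruct (upd (vn v n) n0 r) p) H1).
Qed.

Lemma N_true p : true_in_R p -> forall v, sat N v p.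
Proof. intros H v. apply los. apply Uall. intros n. apply H. Qed.


Ltac absd := repeat match goal with
  | H : context [Rabs ?a] |- _ => unfold Rabs in H
  | H : context [Rcase_abs ?a] |- _ => destruct (Rcase_abs a)
  end.

Definition e (r : R) : D := sfD r s1D.
Lemma e_cl r : e r = cl (fun _ => r).
Proof. unfold e, s1D. rewrite sfD_cl. apply cl_ext. intros; ring. Qed.

Lemma ltD_irrefl x : ~ ltD x x.
Proof. unfold ltD. apply Ufalse. intros n; lra. Qed.
Lemma ltD_trans x y z : ltD x y -> ltD y z -> ltD x z.
Proof. unfold ltD. intros A B. apply (U2 _ _ _ A B). intros; lra. Qed.
Lemma ltD_asym x y : ltD x y -> ~ ltD y x.
Proof. intros A B. apply (ltD_irrefl x). eapply ltD_trans; eauto. Qed.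
Lemma ltD_total x y : ltD x y \/ x = y \/ ltD y x.
Proof.
  destruct (Uem (fun n => val x n < val y n)) as [A|A]; [left; exact A|].
  destruct (Uem (fun n => val x n = val y n)) as [B|B].
  - right; left. rewrite <- (cl_val x), <- (cl_val y). apply cl_eq. exact B.
  - right; right. unfold ltD. apply (U2 _ _ _ A B). intros n; lra.
Qed.

Definition isst (x : D) (s : R) : Prop :=
  (forall r, r < s -> U (fun n => r < val x n)) /\ (forall r, s < r -> U (fun n => val x n < r)).

Lemma isst_cl f s : isst (cl f) s <->
  (forall r, r < s -> U (fun n => r < f n)) /\ (forall r, s < r -> U (fun n => f n < r)).
Proof.
  unfold isst. split; intros [A B]; split; intros r Hr.
  - apply (U2 _ _ _ (A r Hr) (val_cl f)). intros n; lra.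
  - apply (U2 _ _ _ (B r Hr) (val_cl f)). intros n; lra.
  - apply (U2 _ _ _ (A r Hr) (val_cl f)). intros n; lra.
  - apply (U2 _ _ _ (B r Hr) (val_cl f)). intros n; lra.
Qed.

Lemma isst_unique x s s' : isst x s -> isst x s' -> s = s'.
Proof.
  intros [A B] [A' B']. destruct (Rtotal_order s s') as [H|[H|H]]; auto; exfalso.
  - apply (Ufalse (fun n => val x n < (s+s')/2 /\ (s+s')/2 < val x n)). intros n; lra.
    apply Uand. apply B; lra. apply A'; lra.
  - apply (Ufalse (fun n => val x n < (s+s')/2 /\ (s+s')/2 < val x n)). intros n; lra.
    apply Uand. apply B'; lra. apply A; lra.
Qed.

Definition st (x : D) : R :=
  match excluded_middle_informative (exists s, isst x s) with
  | left _ => epsilon (inhabits 0) (isst x)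
  | right _ => 0 end.
Lemma st_spec x s : isst x s -> st x = s.
Proof.
  intros H. unfold st. destruct (excluded_middle_informative _) as [E|E].
  - apply (isst_unique x). apply (epsilon_spec (inhabits 0) (isst x) E). auto.
  - exfalso; eauto.
Qed.
Lemma st_none x : ~ (exists s, isst x s) -> st x = 0.
Proof. intros H. unfold st. destruct (excluded_middle_informative _); tauto. Qed.

Definition dn (n : nat) : R := / INR (S n).
Lemma dn_pos n : 0 < dn n.
Proof. unfold dn. apply Rinv_0_lt_compat. apply lt_0_INR. lia. Qed.

Section KGen.
Variable H : R -> R -> R -> R.
Hypothesis HP : forall s t d, 0 < d -> s <> 0 ->
  ((s < t <-> s < H s t d) /\ (t < s <-> H s t d < s)) /\ Rabs (H s t d - t) <= Rabs (t - s).
Hypothesis H0 : forall t d, H 0 t d = t.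

Lemma kgen x s : isst x s ->
  isst (cl (fun n => H s (val x n) (dn n))) s /\
  (U (fun n => s < val x n) <-> U (fun n => s < H s (val x n) (dn n))) /\
  (U (fun n => val x n < s) <-> U (fun n => H s (val x n) (dn n) < s)).
Proof.
  intros Hx. destruct (Req_dec s 0) as [->|Hs].
  - replace (fun n => H 0 (val x n) (dn n)) with (val x)
      by (apply functional_extensionality; intros; rewrite H0; auto).
    replace (fun n => 0 < H 0 (val x n) (dn n)) with (fun n => 0 < val x n)
      by (apply functional_extensionality; intros; rewrite H0; auto).
    replace (fun n => H 0 (val x n) (dn n) < 0) with (fun n => val x n < 0)
      by (apply functional_extensionality; intros; rewrite H0; auto).
    rewrite cl_val. tauto.
  - split; [apply isst_cl; split|split; split; intros A].
    + intros r Hr. destruct Hx as [Hx1 _]. specialize (Hx1 ((r+s)/2) ltac:(lra)).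
      apply (Um _ _ Hx1). intros n Hn.
      destruct (HP s (val x n) (dn n) (dn_pos n) Hs) as [[A B] C].
      destruct (Rlt_dec s (val x n)) as [h|h].
      * apply A in h. lra.
      * absd; lra.
    + intros r Hr. destruct Hx as [_ Hx1]. specialize (Hx1 ((r+s)/2) ltac:(lra)).
      apply (Um _ _ Hx1). intros n Hn.
      destruct (HP s (val x n) (dn n) (dn_pos n) Hs) as [[A B] C].
      destruct (Rlt_dec (val x n) s) as [h|h].
      * apply B in h. lra.
      * absd; lra.
    + apply (Um _ _ A). intros n h. apply (HP s (val x n) (dn n) (dn_pos n) Hs). auto.
    + apply (Um _ _ A). intros n h. apply (HP s (val x n) (dn n) (dn_pos n) Hs). auto.
    + apply (Um _ _ A). intros n h. apply (HP s (val x n) (dn n) (dn_pos n) Hs). auto.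
    + apply (Um _ _ A). intros n h. apply (HP s (val x n) (dn n) (dn_pos n) Hs). auto.
Qed.
End KGen.

Definition Psi (x : D) : D := cl (fun n => psi (st x) (val x n) (dn n)).
Definition Phi (x : D) : D := cl (fun n => phi (st x) (val x n) (dn n)).

Lemma psi0 t d : psi 0 t d = t. Proof. unfold psi. rewrite G0. ring. Qed.
Lemma phi0 t d : phi 0 t d = t. Proof. unfold phi. rewrite G0. field. Qed.

Lemma Psi_none x : ~ (exists s, isst x s) -> Psi x = x.
Proof. intros H. unfold Psi. rewrite st_none by auto.
  transitivity (cl (val x)); [|apply cl_val]. apply cl_ext. intros; apply psi0. Qed.
Lemma Phi_none x : ~ (exists s, isst x s) -> Phi x = x.
Proof. intros H. unfold Phi. rewrite st_none by auto.
  transitivity (cl (val x)); [|apply cl_val]. apply cl_ext. intros; apply phi0. Qed.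

Lemma Psi_isst x s : isst x s -> isst (Psi x) s.
Proof. intros H. unfold Psi. rewrite (st_spec x s H). apply (kgen psi psi_prop psi0 x s H). Qed.
Lemma Phi_isst x s : isst x s -> isst (Phi x) s.
Proof. intros H. unfold Phi. rewrite (st_spec x s H). apply (kgen phi phi_prop phi0 x s H). Qed.

Lemma Psi_cut x r : (U (fun n => r < val x n) <-> U (fun n => r < val (Psi x) n)) /\
                    (U (fun n => val x n < r) <-> U (fun n => val (Psi x) n < r)).
Proof.
  destruct (classic (exists s, isst x s)) as [[s Hs]|Hn].
  2:{ rewrite Psi_none; tauto. }
  pose proof (Psi_isst x s Hs) as Hs'.
  destruct (Rtotal_order r s) as [h|[h|h]].
  - assert (A : U (fun n => r < val x n)) by (apply Hs; auto).
    assert (A' : U (fun n => r < val (Psi x) n)) by (apply Hs'; auto).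
    split; split; intros; auto; exfalso.
    + apply (Ufalse (fun n => val x n < r /\ r < val x n)). intros n; lra. apply Uand; auto.
    + apply (Ufalse (fun n => val (Psi x) n < r /\ r < val (Psi x) n)). intros n; lra. apply Uand; auto.
  - subst r. destruct (kgen psi psi_prop psi0 x s Hs) as [_ [K1 K2]].
    assert (E : eqU (val (Psi x)) (fun n => psi s (val x n) (dn n))).
    { unfold Psi. rewrite (st_spec x s Hs). apply val_cl. }
    split; split; intros A.
    + apply K1 in A. apply (U2 _ _ _ A E). intros n; lra.
    + apply K1. apply (U2 _ _ _ A E). intros n; lra.
    + apply K2 in A. apply (U2 _ _ _ A E). intros n; lra.
    + apply K2. apply (U2 _ _ _ A E). intros n; lra.
  - assert (A : U (fun n => val x n < r)) by (apply Hs; auto).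
    assert (A' : U (fun n => val (Psi x) n < r)) by (apply Hs'; auto).
    split; split; intros; auto; exfalso.
    + apply (Ufalse (fun n => val x n < r /\ r < val x n)). intros n; lra. apply Uand; auto.
    + apply (Ufalse (fun n => val (Psi x) n < r /\ r < val (Psi x) n)). intros n; lra. apply Uand; auto.
Qed.

Lemma Psi_mono x y : ltD x y -> ltD (Psi x) (Psi y).
Proof.
  intros Hxy.
  destruct (classic (exists r, U (fun n => val x n < r) /\ U (fun n => r < val y n))) as [[r [A B]]|Hn].
  - apply (proj2 (Psi_cut x r)) in A. apply (proj1 (Psi_cut y r)) in B.
    unfold ltD. apply (U2 _ _ _ A B). intros n; lra.
  - assert (Hst : st x = st y).
    { destruct (classic (exists s, isst x s)) as [[s Hs]|Nx].
      - assert (Hy : isst y s).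
        { split; intros r Hr.
          + apply (U2 _ _ _ (proj1 Hs r Hr) Hxy). intros n; lra.
          + destruct (Uem (fun n => val y n < r)) as [C|C]; auto. exfalso. apply Hn.
            exists ((s + r)/2). split. apply Hs. lra. apply (Um _ _ C). intros n; lra. }
        rewrite (st_spec x s Hs), (st_spec y s Hy). auto.
      - destruct (classic (exists s, isst y s)) as [[s Hs]|Ny].
        + exfalso. apply Nx. exists s. split; intros r Hr.
          * destruct (Uem (fun n => r < val x n)) as [C|C]; auto. exfalso. apply Hn.
            exists ((s + r)/2). split. apply (Um _ _ C). intros n; lra. apply Hs. lra.
          * apply (U2 _ _ _ (proj2 Hs r Hr) Hxy). intros n; lra.
        + rewrite (st_none x Nx), (st_none y Ny). auto. }
    unfold Psi. rewrite Hst. apply ltD_cl. apply (Um _ _ Hxy). intros n h. apply psi_mono; auto.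
Qed.

Lemma Psi_lt_iff x y : ltD x y <-> ltD (Psi x) (Psi y).
Proof.
  split. apply Psi_mono. intros H.
  destruct (ltD_total x y) as [h|[h|h]]; auto.
  - subst. exfalso. apply (ltD_irrefl _ H).
  - exfalso. apply (ltD_asym _ _ H). apply Psi_mono; auto.
Qed.

Lemma Psi_inj x y : Psi x = Psi y -> x = y.
Proof.
  intros H. destruct (ltD_total x y) as [h|[h|h]]; auto; exfalso;
   apply Psi_mono in h; rewrite H in h; apply (ltD_irrefl _ h).
Qed.

Lemma Psi_Phi y : Psi (Phi y) = y.
Proof.
  destruct (classic (exists s, isst y s)) as [[s Hs]|Hn].
  - unfold Psi at 1. rewrite (st_spec (Phi y) s (Phi_isst y s Hs)).
    transitivity (cl (val y)); [|apply cl_val]. apply cl_eq.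
    assert (E : eqU (val (Phi y)) (fun n => phi s (val y n) (dn n))).
    { unfold Phi. rewrite (st_spec y s Hs). apply val_cl. }
    apply (Um _ _ E). intros n h. rewrite h. apply psi_phi.
  - rewrite Phi_none by auto. apply Psi_none; auto.
Qed.

Lemma isst_scale a x s : a <> 0 -> isst x s -> isst (sfD a x) (a * s).
Proof.
  intros Ha [A B]. unfold sfD. apply isst_cl.
  assert (E : forall r, a * (r / a) = r) by (intros; field; auto).
  split; intros r Hr.
  - destruct (Rlt_dec 0 a) as [h|h].
    + assert (Hq : r / a < s).
      { apply (Rmult_lt_reg_l a). auto. rewrite E. lra. }
      apply (Um _ _ (A _ Hq)). intros n hn.
      assert (a * (r / a) < a * val x n) by (apply Rmult_lt_compat_l; auto).
      rewrite E in H; lra.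
    + assert (a < 0) by lra. assert (Hq : s < r / a).
      { apply (Rmult_lt_reg_l (- a)). lra. replace (- a * (r / a)) with (- r) by (rewrite <- (E r) at 1; ring). nra. }
      apply (Um _ _ (B _ Hq)). intros n hn.
      assert (- a * val x n < - a * (r / a)) by (apply Rmult_lt_compat_l; lra).
      replace (- a * (r / a)) with (- r) in H0 by (rewrite <- (E r) at 1; ring). lra.
  - destruct (Rlt_dec 0 a) as [h|h].
    + assert (Hq : s < r / a).
      { apply (Rmult_lt_reg_l a). auto. rewrite E. lra. }
      apply (Um _ _ (B _ Hq)). intros n hn.
      assert (a * val x n < a * (r / a)) by (apply Rmult_lt_compat_l; auto).
      rewrite E in H; lra.
    + assert (a < 0) by lra. assert (Hq : r / a < s).
      { apply (Rmult_lt_reg_l (- a)). lra. replace (- a * (r / a)) with (- r) by (rewrite <- (E r) at 1; ring). nra. }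
      apply (Um _ _ (A _ Hq)). intros n hn.
      assert (- a * (r / a) < - a * val x n) by (apply Rmult_lt_compat_l; lra).
      replace (- a * (r / a)) with (- r) in H0 by (rewrite <- (E r) at 1; ring). lra.
Qed.

Lemma sfD_sfD a b x : sfD a (sfD b x) = sfD (a * b) x.
Proof. unfold sfD at 2. rewrite sfD_cl. unfold sfD. apply cl_ext. intros; ring. Qed.
Lemma sfD_1 x : sfD 1 x = x.
Proof. unfold sfD. transitivity (cl (val x)); [|apply cl_val]. apply cl_ext. intros; ring. Qed.
Lemma sfD_0 x : sfD 0 x = s0D.
Proof. unfold sfD, s0D. apply cl_ext. intros; ring. Qed.

Lemma isst_0 : isst s0D 0.
Proof. unfold s0D. apply isst_cl. split; intros r Hr; apply Uall; intros; lra. Qed.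

Lemma st_scale a x : st (sfD a x) = a * st x.
Proof.
  destruct (Req_dec a 0) as [->|Ha].
  - rewrite sfD_0. rewrite (st_spec _ 0 isst_0). ring.
  - destruct (classic (exists s, isst x s)) as [[s Hs]|Hn].
    + rewrite (st_spec x s Hs). apply st_spec. apply isst_scale; auto.
    + rewrite (st_none x Hn). rewrite st_none. ring.
      intros [s' Hs']. apply Hn. exists (/ a * s').
      apply (isst_scale (/ a)) in Hs'. rewrite sfD_sfD in Hs'.
      replace (/ a * a) with 1 in Hs' by (field; auto). rewrite sfD_1 in Hs'. auto.
      apply Rinv_neq_0_compat; auto.
Qed.

Lemma Psi_homog a x : Psi (sfD a x) = sfD a (Psi x).
Proof.
  unfold Psi at 1. rewrite st_scale. unfold Psi. rewrite sfD_cl. apply cl_eq.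
  assert (E : eqU (val (sfD a x)) (fun n => a * val x n)) by apply val_cl.
  apply (Um _ _ E). intros n h. rewrite h. unfold psi. rewrite G_scale. ring.
Qed.

Lemma Psi_0 : Psi s0D = s0D.
Proof. rewrite <- (sfD_0 s0D) at 1. rewrite Psi_homog. rewrite !sfD_0. reflexivity. Qed.

Lemma Psi_1 : Psi s1D = s1D.
Proof.
  assert (H : isst s1D 1).
  { unfold s1D. apply isst_cl. split; intros r Hr; apply Uall; intros; lra. }
  unfold Psi. rewrite (st_spec _ 1 H). transitivity (cl (fun _ => 1)); [|reflexivity]. apply cl_eq.
  apply (Um _ _ (val_cl (fun _ => 1))). intros n h. unfold s1D in *. rewrite h.
  unfold psi. rewrite Gss. ring. left; apply dn_pos.
Qed.


Definition mulM (x y : D) : D := Phi (op2 Rmult (Psi x) (Psi y)).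
Definition divM (x y : D) : D := Phi (op2 rdiv0 (Psi x) (Psi y)).
Definition Mst : structure := Structure D s0D s1D (op2 Rplus) (op2 Rminus) mulM divM ltD sfD.

Lemma teval_Mst_add (F : R -> Prop) v t : term_add F t -> teval N v t = teval Mst v t.
Proof.
  induction t; simpl; intros; try tauto;
   try (destruct H; rewrite IHt1, IHt2 by auto; reflexivity).
  destruct H. rewrite IHt by auto. reflexivity.
Qed.

Lemma teval_Mst_mult (F : R -> Prop) v t : term_mult F t ->
  teval N (fun k => Psi (v k)) t = Psi (teval Mst v t).
Proof.
  induction t; simpl; intros; try tauto.
  - symmetry; apply Psi_0.
  - symmetry; apply Psi_1.
  - destruct H. rewrite IHt1, IHt2 by auto. unfold mulM. rewrite Psi_Phi. reflexivity.
  - destruct H. rewrite IHt1, IHt2 by auto. unfold divM. rewrite Psi_Phi. reflexivity.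
  - destruct H. rewrite IHt by auto. symmetry; apply Psi_homog.
Qed.

Lemma dn_small eps : 0 < eps -> U (fun n => dn n < eps).
Proof.
  intros He. destruct (archimed (/ eps)) as [H1 _].
  assert (0 < / eps) by (apply Rinv_0_lt_compat; auto).
  apply (Um _ _ (Ucof (Z.to_nat (up (/ eps))))). intros n Hn.
  assert (Hz : (0 <= up (/ eps))%Z) by (apply le_IZR; lra).
  assert (Hk : / eps < INR (S n)).
  { apply le_INR in Hn. rewrite INR_IZR_INZ in Hn. rewrite Z2Nat.id in Hn by auto.
    rewrite S_INR. lra. }
  unfold dn. rewrite <- (Rinv_inv eps).
  apply Rinv_lt_contravar; auto. apply Rmult_lt_0_compat; auto. lra.
Qed.

Lemma dn_le1 n : dn n <= 1.
Proof. unfold dn. rewrite <- Rinv_1. apply Rinv_le_contravar. lra.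
  rewrite S_INR. pose proof (pos_INR n). lra. Qed.
Lemma dn_lt1 n : (1 <= n)%nat -> dn n < 1.
Proof. intros Hn. unfold dn. rewrite <- Rinv_1. apply Rinv_lt_contravar. rewrite Rmult_1_l.
  apply lt_0_INR; lia. rewrite S_INR. apply le_INR in Hn. simpl in Hn. lra. Qed.

Lemma real_fail d : 0 < d < 1 -> phi 1 ((1 + d) * (1 + d)) d - 2 * (1 + d) + 1 < 0.
Proof. intros. gcase; nra. Qed.
Lemma real_psi1 d : 0 < d -> psi 1 (1 + d) d = 1 + d.
Proof. intros. gcase; nra. Qed.

Lemma Mst_fail eps : 0 <= eps -> ~ (forall v, sat Mst v (target eps)).
Proof.
  intros Heps H. set (x0 := cl (fun n => 1 + dn n)).
  specialize (H (fun _ => s0D)). simpl in H. specialize (H x0). unfold upd in H; simpl in H.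
  assert (E7 : eqU (val x0) (fun n => 1 + dn n)) by apply val_cl.
  assert (Hx0 : isst x0 1).
  { apply isst_cl. split; intros r Hr; [apply Uall; intros n; pose proof (dn_pos n); lra|].
    apply (Um _ _ (dn_small (r - 1) ltac:(lra))). intros n; lra. }
  assert (Px0 : Psi x0 = x0).
  { unfold Psi. rewrite (st_spec _ 1 Hx0). transitivity (cl (val x0)); [|apply cl_val].
    apply cl_eq. apply (Um _ _ E7). intros n h. rewrite h. apply real_psi1, dn_pos. }
  unfold mulM in H. rewrite Px0 in H.
  set (z := op2 Rmult x0 x0) in H.
  assert (E5 : eqU (val z) (fun n => (1 + dn n) * (1 + dn n))).
  { apply (U2 _ _ _ (val_cl (fun n => val x0 n * val x0 n)) E7). intros n h1 h2.
    unfold z, op2. rewrite h1, h2. reflexivity. }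
  assert (Hz : isst z 1).
  { split; intros r Hr.
    - apply (Um _ _ E5). intros n h. rewrite h. pose proof (dn_pos n). nra.
    - apply (U2 _ _ _ E5 (dn_small ((r - 1)/3) ltac:(lra))). intros n h1 h2. rewrite h1.
      pose proof (dn_pos n). pose proof (dn_le1 n). nra. }
  assert (E4 : eqU (val (Phi z)) (fun n => phi 1 (val z n) (dn n))).
  { unfold Phi. rewrite (st_spec _ 1 Hz). apply val_cl. }
  set (poly := op2 Rplus (op2 Rminus (Phi z) (sfD 2 x0)) s1D) in H.
  assert (Hlt : ltD poly (sfD eps s1D)).
  { assert (E1 : eqU (val poly) (fun n => val (op2 Rminus (Phi z) (sfD 2 x0)) n + val s1D n)) by apply val_cl.
    assert (E2 : eqU (val (op2 Rminus (Phi z) (sfD 2 x0))) (fun n => val (Phi z) n - val (sfD 2 x0) n)) by apply val_cl.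
    assert (E3 : eqU (val s1D) (fun _ => 1)) by apply val_cl.
    assert (E6 : eqU (val (sfD 2 x0)) (fun n => 2 * val x0 n)) by apply val_cl.
    assert (E8 : eqU (val (sfD eps s1D)) (fun n => eps * val s1D n)) by apply val_cl.
    unfold ltD.
    apply (U3 _ _ _ _ (Uand _ _ E1 E2) (Uand _ _ E3 E4)
             (Uand _ _ (Uand _ _ E5 E6) (Uand _ _ (Uand _ _ E7 E8) (Ucof 1)))).
    intros n [h1 h2] [h3 h4] [[h5 h6] [[h7 h8] h9]].
    rewrite h1, h2, h3, h4, h5, h6, h7, h8, h3.
    pose proof (real_fail (dn n) (conj (dn_pos n) (dn_lt1 n h9))). nra. }
  destruct H as [H|H].
  - apply (ltD_asym _ _ H Hlt).
  - rewrite H in Hlt. apply (ltD_irrefl _ Hlt).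
Qed.

End Ultra.

Lemma sat_iso (M1 M2 : structure) (h : dom M1 -> dom M2) (tin : term -> Prop)
  (hinj : forall x y, h x = h y -> x = y) (hsurj : forall y, exists x, h x = y)
  (hlt : forall x y, slt M1 x y <-> slt M2 (h x) (h y))
  (hterm : forall v t, tin t -> teval M2 (fun k => h (v k)) t = h (teval M1 v t)) :
  forall p v, formula_in tin p -> (sat M1 v p <-> sat M2 (fun k => h (v k)) p).
Proof.
  assert (Hupd : forall v n d, (fun k => h (upd v n d k)) = upd (fun k => h (v k)) n (h d)).
  { intros. apply functional_extensionality. intros k. unfold upd. destruct (Nat.eqb k n); auto. }
  induction p as [| | | |p1 IHp1 p2 IHp2|p1 IHp1 p2 IHp2|p1 IHp1 p2 IHp2|n0 p IHp|n0 p IHp];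
    intros v Hp; simpl in *.
  - tauto.
  - destruct Hp. rewrite !hterm by auto. split; [intros ->; auto | apply hinj].
  - destruct Hp. rewrite !hterm by auto. apply hlt.
  - rewrite IHp by auto; tauto.
  - destruct Hp. rewrite IHp1, IHp2 by auto; tauto.
  - destruct Hp. rewrite IHp1, IHp2 by auto; tauto.
  - destruct Hp. rewrite IHp1, IHp2 by auto; tauto.
  - split; intros H d.
    + destruct (hsurj d) as [d' <-]. specialize (H d'). apply IHp in H; auto.
      rewrite Hupd in H. exact H.
    + apply IHp; auto. rewrite Hupd. apply H.
  - split; intros [d H].
    + exists (h d). apply IHp in H; auto. rewrite Hupd in H. exact H.
    + destruct (hsurj d) as [d' <-]. exists d'. apply IHp; auto. rewrite Hupd. exact H.
Qed.

Lemma Mst_model U (HU : isUltra U) (F : R -> Prop) q : in_T F q -> forall v, sat (Mst U HU) v q.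
Proof.
  intros [Hs [Ht [Ha|Hm]]] v.
  - apply (sat_iso (Mst U HU) (N U HU) (fun x => x) (term_add F)); auto.
    + intros y; exists y; auto.
    + intros; simpl; tauto.
    + intros. apply (teval_Mst_add U HU F); auto.
    + apply (N_true U HU). auto.
  - apply (sat_iso (Mst U HU) (N U HU) (Psi U HU) (term_mult F)); auto.
    + apply Psi_inj; auto.
    + intros y; exists (Phi U HU y). apply Psi_Phi; auto.
    + intros; simpl. apply Psi_lt_iff; auto.
    + intros. apply (teval_Mst_mult U HU F); auto.
    + apply (N_true U HU). auto.
Qed.

Theorem theorem5p2 (F : R -> Prop) (HF : is_subfield F) :
  (forall eps : R, F eps -> (proves F (target eps) <-> eps < 0)) /\
  ~ proves F (target 0).
Proof.
  assert (Hno : forall eps, 0 <= eps -> ~ proves F (target eps)).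
  { intros eps Heps Hp. destruct UF.ultra_exists as [U HU].
    apply (Mst_fail U HU eps Heps). intros v. apply Hp.
    intros q Hq v'. apply (Mst_model U HU F); auto. }
  split.
  - intros eps Feps. split.
    + intros Hp. destruct (Rlt_dec eps 0) as [h|h]; auto.
      exfalso. apply (Hno eps); auto. lra.
    + intros. apply part1; auto.
  - apply Hno. lra.
Qed.
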